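(* Let $X$ be a regular Hausdorff space. Then $X$ is an $\aleph_k$-space if and only if $\mathcal{K}(X)$ is an $\aleph_k$-space; and $X$ is an $\overline{\aleph}_k$-space if and only if $\mathcal{K}(X)$ is an $\overline{\aleph}_k$-space.
   Context: $\mathcal{K}(X)$ is the space of nonempty compact subsets of $X$ with the Vietoris topology (base: $\langle U_1,\dots,U_k\rangle=\{K: K\subset\bigcup U_i,\ K\cap U_j\neq\emptyset\ \forall j\}$, $U_i$ open). A family $\mathcal{P}$ of subsets of $Y$ is a $k$-network if for every compact $K$ and open $U\supset K$ some finite $\mathcal{P}'\subset\mathcal{P}$ satisfies $K\subset\bigcup\mathcal{P}'\subset U$; it is compact-countable if each compact set meets only countably many members. A regular space is an $\aleph_k$-space if it has a compact-countable $k$-network, and an $\overline{\aleph}_k$-space if it has a compact-countable $k$-network consisting of closed sets. *)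

(* Defs.v *)
From HB Require Import structures.
From mathcomp Require Import all_boot all_order.
From mathcomp Require Import all_classical all_reals all_analysis.
Set Implicit Arguments. Unset Strict Implicit. Unset Printing Implicit Defensive.
Local Open Scope classical_set_scope.

Definition hyperspace (X : topologicalType) :=
  {K : set X | `[< compact K /\ K !=set0 >]}.

Section Hyper.
Variable X : topologicalType.
HB.instance Definition _ := Choice.on (hyperspace X).

Definition vietoris_subbase (p : bool * set X) : set (hyperspace X) :=
  if p.1 then [set K | (proj1_sig K) `<=` p.2]
  else [set K | (proj1_sig K) `&` p.2 !=set0].

HB.instance Definition _ := isSubBaseTopological.Build (hyperspace X)
  [set p : bool * set X | open p.2] vietoris_subbase.
End Hyper.


Definition k_network (Y : topologicalType) (P : set (set Y)) : Prop :=
  forall (K U : set Y), compact K -> open U -> K `<=` U ->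
    exists F : set (set Y), [/\ finite_set F, F `<=` P,
      K `<=` \bigcup_(A in F) A & \bigcup_(A in F) A `<=` U].

Definition compact_countable (Y : topologicalType) (P : set (set Y)) : Prop :=
  forall K : set Y, compact K -> countable [set A | P A /\ A `&` K !=set0].

Definition aleph_k_space (Y : topologicalType) : Prop :=
  regular_space Y /\
  exists P : set (set Y), k_network P /\ compact_countable P.

Definition closed_aleph_k_space (Y : topologicalType) : Prop :=
  regular_space Y /\
  exists P : set (set Y), [/\ k_network P, compact_countable P &
                             forall A, P A -> closed A].

(* Main.v *)
Set Warnings "-all".
Require Import Defs.
From HB Require Import structures.
From mathcomp Require Import all_boot all_order.
From mathcomp Require Import all_classical all_reals all_analysis.
From mathcomp Require Import finmap.
Local Open Scope classical_set_scope.

Section PtCopy.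
Variables (T : topologicalType) (a : T).
Definition ptcopy (b : T) : Type := T.
HB.instance Definition _ := Topological.on (ptcopy a).
HB.instance Definition _ := isPointed.Build (ptcopy a) a.
End PtCopy.

Lemma gen_compact_cover (T : topologicalType) (A : set T) :
  compact A -> cover_compact A.
Proof.
have [->|/set0P[a Aa]] := eqVneq A set0.
  move=> _ I D f _ _; exists fset0%fset => //.
move=> cA.
have := @compact_cover (ptcopy T a).
move=> E; have : @compact (ptcopy T a) A by [].
by rewrite E.
Qed.

Lemma gen_cover_compact (T : topologicalType) (A : set T) :
  cover_compact A -> compact A.
Proof.
have [->|/set0P[a Aa]] := eqVneq A set0.
  move=> _; exact: compact0.
move=> cA.
have := @compact_cover (ptcopy T a).
move=> E; have : @cover_compact (ptcopy T a) A by [].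
by rewrite -E.
Qed.


Section Reg.
Variable X : topologicalType.
Hypothesis hX : regular_space X.

Lemma closure_min (A B : set X) : closed B -> A `<=` B -> closure A `<=` B.
Proof. by move=> /closure_id cB AB; rewrite cB; exact: closureS. Qed.

Lemma reg_point (w : set X) x : open w -> w x ->
  exists w', [/\ open w', w' x & closure w' `<=` w].
Proof.
move=> ow wx.
have : nbhs x w by apply: open_nbhs_nbhs.
move=> /hX [C Cx clC].
exists C°; split => //; first exact: open_interior.
apply: subset_trans clC; apply: closureS; exact: interior_subset.
Qed.

Lemma reg_compact (K V : set X) : compact K -> open V -> K `<=` V ->
  exists V', [/\ open V', K `<=` V' & closure V' `<=` V].
Proof.
move=> cK oV KV.
have HO' : forall x, exists Of : set X, K x -> [/\ open Of, Of x & closure Of `<=` V].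
  move=> x.
  have [Kx|nKx] := pselect (K x); last by exists set0.
  have [w' [? ? ?]] := @reg_point V x oV (KV _ Kx); by exists w'.
have [Of HO] := choice HO'.
have oO : forall i, K i -> open (Of i) by move=> i /HO [].
have cov : K `<=` cover K Of by move=> x Kx; exists x => //; case: (HO x Kx).
have [D' D'K KD'] := @gen_compact_cover X K cK X K Of oO cov.
exists (\bigcup_(i in [set` D']) Of i); split.
- apply: bigcup_open => i /= iD; have Ki := set_mem (D'K _ iD).
  by case: (HO _ Ki).
- exact: KD'.
- apply: (@subset_trans _ (\bigcup_(i in [set` D']) closure (Of i))).
    apply: closure_min.
      apply: closed_bigcup; first exact: finite_fset.
      move=> i _; exact: closed_closure.
    move=> y [i iD Oiy]; exists i => //; exact: subset_closure.
  move=> y [i /= iD]; have Ki := set_mem (D'K _ iD).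
  by case: (HO _ Ki) => _ _; apply.
Qed.
End Reg.


Section Hyp.
Variable X : topologicalType.
Local Notation H := (hyperspace X).

Lemma openH_intro (D' : set (set H)) :
  D' `<=` finI_from [set p : bool * set X | open p.2] (@vietoris_subbase X) ->
  open (\bigcup_(i in D') i).
Proof. by move=> sub; exists D'. Qed.

Lemma open_sub (U : set X) : open U -> open [set M : H | sval M `<=` U].
Proof.
move=> oU.
have -> : [set M : H | sval M `<=` U] =
  \bigcup_(i in [set @vietoris_subbase X (true, U)]) i by rewrite bigcup_set1.
apply: openH_intro => _ ->; exact: finI_from1.
Qed.

Lemma open_meet (U : set X) : open U -> open [set M : H | sval M `&` U !=set0].
Proof.
move=> oU.
have -> : [set M : H | sval M `&` U !=set0] =
  \bigcup_(i in [set @vietoris_subbase X (false, U)]) i by rewrite bigcup_set1.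
apply: openH_intro => _ ->; exact: finI_from1.
Qed.

Definition box (V : set X) (W : set (set X)) : set H :=
  [set M | sval M `<=` V /\ forall w, W w -> sval M `&` w !=set0].

Lemma box_open V W : open V -> finite_set W -> (forall w, W w -> open w) ->
  open (box V W).
Proof.
move=> oV /finite_fsetP [W0 ->] oW.
rewrite openE => M BM.
have : nbhs M ([set M : H | sval M `<=` V] `&`
   \bigcap_(w in [set` W0]) [set M : H | sval M `&` w !=set0]).
  apply: filterI.
    by apply: open_nbhs_nbhs; split; [exact: open_sub| case: BM].
  apply: filter_bigI => w w0.
  apply: open_nbhs_nbhs; split; first exact: open_meet (oW _ w0).
  by case: BM => _; apply.
by apply: filterS => N [NV NW]; split => // w w0; exact: NW.
Qed.

Lemma box_closed V W : closed V -> (forall w, W w -> closed w) ->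
  closed (box V W).
Proof.
move=> cV cW; rewrite -openC openE => M nBM.
have [MV|nMV] := pselect (sval M `<=` V); last first.
  move/existsNP: nMV => [x /not_implyP [Mx nVx]].
  have : nbhs M [set N : H | sval N `&` ~` V !=set0].
    apply: open_nbhs_nbhs; split; last by exists x.
    exact/open_meet/closed_openC.
  apply: filterS => N [y [Ny nVy]] [NV _]; exact/nVy/NV.
have : exists w, W w /\ sval M `&` w = set0.
  apply: contrapT => nex; apply: nBM; split => // w Ww.
  apply/set0P/eqP => E; apply: nex; by exists w.
move=> [w [Ww Mw]].
have : nbhs M [set N : H | sval N `<=` ~` w].
  apply: open_nbhs_nbhs; split; first exact/open_sub/closed_openC/(cW _ Ww).
  move=> x Mx wx; suff : (sval M `&` w) x by rewrite Mw.
  by split.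
apply: filterS => N Nw [_ NW]; have [y [Ny wy]] := NW _ Ww; exact: Nw Ny wy.
Qed.


Lemma sval_compact (M : H) : compact (sval M).
Proof. by case: M => K /= /asboolP []. Qed.

Lemma sval_nonempty (M : H) : sval M !=set0.
Proof. by case: M => K /= /asboolP []. Qed.

Lemma nbhs_box (U : set H) (M : H) : open U -> U M ->
  exists V W, [/\ open V, finite_set W, (forall w, W w -> open w),
    box V W M & box V W `<=` U].
Proof.
move=> [D' sub E]; rewrite -E => -[i D'i iM].
have [F sF iE] := sub _ D'i.
pose V := [set x | forall p, p \in F -> p.1 -> p.2 x].
pose W := [set p.2 | p in [set p | p \in F /\ p.1 = false]].
have Fo : forall p, p \in F -> open p.2 by move=> p /sF /set_mem.
have sub_i : box V W `<=` i.
  move=> N [NV NW]; rewrite -iE => p /= pF.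
  move: (pF); rewrite /vietoris_subbase; case: p pF => [[] U0] pF /= _.
  - by move=> x /NV /(_ _ pF erefl).
  - by apply: NW; exists (false, U0).
exists V, W; split.
- rewrite openE => x Vx.
  have : nbhs x (\bigcap_(p in [set` F]) (if p.1 then p.2 else setT)).
    apply: filter_bigI => p pF; case: p pF => [[] U0] pF /=; last exact: filterT.
    by apply: open_nbhs_nbhs; split; [exact: (Fo _ pF)| exact: (Vx _ pF erefl)].
  apply: filterS => y Hy p pF p1; by have := Hy p pF; rewrite p1.
- apply: finite_image; apply: (@sub_finite_set _ _ [set` F]); last exact: finite_fset.
  by move=> p [].
- by move=> _ [p [pF _] <-]; exact: Fo.
- move: iM; rewrite -iE => iM; split.
    move=> x Mx [[] U0] pF //= _; exact: (iM _ pF) x Mx.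
  move=> _ [[[] U0] [pF /= p1] <-] //; exact: (iM _ pF).
- move=> N /sub_i iN; by exists i.
Qed.
End Hyp.
Arguments box {X}.
Arguments openH_intro {X D'}.
Arguments open_sub {X U}.
Arguments open_meet {X U}.
Arguments box_open {X V W}.
Arguments box_closed {X V W}.
Arguments sval_compact {X}.
Arguments sval_nonempty {X}.
Arguments nbhs_box {X U M}.
Arguments reg_point {X} hX {w x}.
Arguments reg_compact {X} hX {K V}.
Arguments closure_min {X A B}.

Section Shrink.
Variable X : topologicalType.
Hypothesis hX : regular_space X.
Local Notation H := (hyperspace X).

Lemma shrink_box (V : set X) (W : set (set X)) (M : H) : open V -> (forall w, W w -> open w) ->
  box V W M -> exists V' (g : set X -> set X),
  [/\ open V', (forall w, W w -> open (g w)), box V' (g @` W) M,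
      closure V' `<=` V & (forall w, W w -> closure (g w) `<=` w)].
Proof.
move=> oV oW [MV MW].
have [V' [oV' MV' cV']] := reg_compact hX (sval_compact M) oV MV.
have G : forall w, exists w', W w ->
    [/\ open w', sval M `&` w' !=set0 & closure w' `<=` w].
  move=> w; have [Ww|nWw] := pselect (W w); last by exists set0.
  have [x [Mx wx]] := MW _ Ww.
  have [w' [ow' w'x cw']] := reg_point hX (oW _ Ww) wx.
  by exists w' => _; split => //; exists x.
have [g Hg] := choice G.
exists V', g; split => //.
- by move=> w /Hg [].
- by split => // _ [w Ww <-]; case: (Hg w Ww).
- by move=> w /Hg [].
Qed.

Lemma H_regular : regular_space H.
Proof.
move=> M A; rewrite nbhsE => -[U [oU UM] UA].
have [V [W [oV fW oW MB BU]]] := nbhs_box oU UM.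
have [V' [g [oV' og MB' cV' cg]]] := @shrink_box V W M oV oW MB.
exists (box V' (g @` W)).
  exists (box V' (g @` W)) => //; split => //; apply: box_open => //.
    exact: finite_image.
  by move=> _ [w Ww <-]; exact: og.
apply: (@subset_trans _ (box (closure V') ((fun w => closure (g w)) @` W))).
  apply: closure_min.
    apply: box_closed; first exact: closed_closure.
    by move=> _ [w _ <-]; exact: closed_closure.
  move=> N [NV NW]; split; first by apply: subset_trans NV _; exact: subset_closure.
  move=> _ [w Ww <-]; have [x [Nx gx]] := NW (g w) (ex_intro2 _ _ w Ww erefl).
  by exists x; split => //; exact: subset_closure.
move=> N [NV NW]; apply: UA; apply: BU; split.
  by apply: subset_trans NV _.
move=> w Ww; have [x [Nx gx]] := NW _ (ex_intro2 _ _ w Ww erefl).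
by exists x; split => //; exact: cg.
Qed.
End Shrink.
Lemma finite_powerset (T : choiceType) (A : set T) :
  finite_set A -> finite_set [set S | S `<=` A].
Proof.
move=> /finite_fsetP [A0 ->].
pose f := fun s : {set A0} => [set x : T | exists y : A0, y \in s /\ val y = x].
apply: (@sub_finite_set _ _ (f @` setT)); last first.
  apply: finite_image; exact: finite_finset.
move=> S SA; exists (finset (fun y : A0 => `[< S (val y) >])) => //.
apply/seteqP; split => x.
  by move=> [y [+ <-]]; rewrite inE => /asboolP.
move=> Sx; have xA := SA _ Sx.
exists [` xA]%fset; split => //; rewrite inE; exact/asboolP.
Qed.

Arguments gen_compact_cover {T A}.
Arguments gen_cover_compact {T A}.
Section Union.
Variable X : topologicalType.
Local Notation H := (hyperspace X).

Lemma union_compact (KK : set H) : compact KK ->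
  compact (\bigcup_(M in KK) sval M).
Proof.
move=> cKK; apply: gen_cover_compact => I D f oF cov.
have G : forall M : H, exists DM : {fset I}, KK M ->
    {subset DM <= D} /\ sval M `<=` cover [set` DM] f.
  move=> M; have [KM|nKM] := pselect (KK M); last by exists fset0%fset.
  have cM : sval M `<=` cover D f by move=> x Mx; apply: cov; exists M.
  have [DM DMD MDM] := gen_compact_cover (sval_compact M) I D f oF cM.
  by exists DM.
have [Dm HDm] := choice G.
pose O := fun M : H => [set N : H | sval N `<=` cover [set` Dm M] f].
have oO : forall M, KK M -> open (O M).
  move=> M KM; apply: open_sub; apply: bigcup_open => i /= iD.
  apply: oF; have [sb _] := HDm M KM; exact/set_mem/sb.
have covO : KK `<=` cover KK O.
  by move=> M KM; exists M => //; have [_] := HDm M KM.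
have [E EK KE] := gen_compact_cover cKK H KK O oO covO.
have fin : finite_set (\bigcup_(M in [set` E]) [set` Dm M]).
  by apply: bigcup_finite; [exact: finite_fset| move=> M _; exact: finite_fset].
exists (fset_set (\bigcup_(M in [set` E]) [set` Dm M])).
  move=> i; rewrite in_fset_set // => /set_mem [M /= ME iDM]; apply/mem_set.
  have KM := set_mem (EK _ ME); have [sb _] := HDm M KM; exact/set_mem/sb.
move=> x [M KM Mx]; have [M' /= M'E OM'] := KE _ KM.
have [i iD fi] := OM' _ Mx.
exists i => //=; rewrite in_fset_set //; apply/mem_set; by exists M'.
Qed.
End Union.
Arguments union_compact {X KK}.

Section Fwd.
Variable X : topologicalType.
Hypothesis hX : regular_space X.
Local Notation H := (hyperspace X).

Definition vbox (S : set (set X)) : set H := box (\bigcup_(A in S) A) S.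
Definition QQ (P : set (set X)) : set (set H) :=
  [set vbox S | S in [set S | finite_set S /\ S `<=` P]].

Lemma H_knet (P : set (set X)) : k_network P -> k_network (QQ P).
Proof.
move=> hP KK U cKK oU KKU.
pose L := \bigcup_(M in KK) sval M.
have cL : compact L := union_compact cKK.
have G : forall M : H, exists d : set X * set (set X) * set X * (set X -> set X),
  KK M -> open d.1.1.1 /\ finite_set d.1.1.2 /\ (forall w, d.1.1.2 w -> open w) /\
    box d.1.1.1 d.1.1.2 `<=` U /\ open d.1.2 /\
    (forall w, d.1.1.2 w -> open (d.2 w)) /\ box d.1.2 (d.2 @` d.1.1.2) M /\
    closure d.1.2 `<=` d.1.1.1 /\ (forall w, d.1.1.2 w -> closure (d.2 w) `<=` w).
  move=> M; have [KM|nKM] := pselect (KK M); last by exists (set0, set0, set0, id).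
  have [V [W [oV fW oW MB BU]]] := nbhs_box oU (KKU M KM).
  have [V' [g [oV' og MB' cV' cg]]] := @shrink_box X hX V W M oV oW MB.
  by exists (V, W, V', g).
have [d Hd] := choice G.
pose V M := (d M).1.1.1. pose W M := (d M).1.1.2.
pose V' M := (d M).1.2. pose g M := (d M).2.
pose O M := box (V' M) (g M @` W M).
have oO : forall M, KK M -> open (O M).
  move=> M KM; have [oV [fW [oW [BU [oV' [og _]]]]]] := Hd M KM.
  apply: box_open => //; first exact: finite_image.
  by move=> _ [w Ww <-]; exact: og.
have covO : KK `<=` cover KK O.
  move=> M KM; exists M => //; by have [_ [_ [_ [_ [_ [_ [MB _]]]]]]] := Hd M KM.
have [E EK KE] := gen_compact_cover cKK H KK O oO covO.
have G1 : forall M : H, exists F1 : set (set X), KK M ->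
    [/\ finite_set F1, F1 `<=` P, L `&` closure (V' M) `<=` \bigcup_(A in F1) A
      & \bigcup_(A in F1) A `<=` V M].
  move=> M; have [KM|nKM] := pselect (KK M); last by exists set0.
  have [oV [fW [oW [BU [oV' [og [MB [cV' cg]]]]]]]] := Hd M KM.
  have [F [? ? ? ?]] := hP (L `&` closure (V' M)) (V M)
    (compact_closedI cL (@closed_closure _ _)) oV (subset_trans (@subIsetr _ _ _) cV').
  by exists F.
have [F1 HF1] := choice G1.
have G2 : forall p : H * set X, exists F2 : set (set X), KK p.1 -> W p.1 p.2 ->
    [/\ finite_set F2, F2 `<=` P,
      L `&` (closure (V' p.1) `&` closure (g p.1 p.2)) `<=` \bigcup_(A in F2) A
      & \bigcup_(A in F2) A `<=` V p.1 `&` p.2].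
  move=> [M w] /=; have [KM|nKM] := pselect (KK M); last by exists set0.
  have [Ww|nWw] := pselect (W M w); last by exists set0.
  have [oV [fW [oW [BU [oV' [og [MB [cV' cg]]]]]]]] := Hd M KM.
  have sb : L `&` (closure (V' M) `&` closure (g M w)) `<=` V M `&` w.
    move=> x [_ [xV xg]]; split; [exact: cV' | exact: (cg _ Ww)].
  have [F [? ? ? ?]] := hP (L `&` (closure (V' M) `&` closure (g M w))) (V M `&` w)
    (compact_closedI cL (closedI (@closed_closure _ _) (@closed_closure _ _)))
    (openI oV (oW _ Ww)) sb.
  by exists F.
have [F2 HF2] := choice G2.
pose PP := \bigcup_(M in [set` E]) (F1 M `|` \bigcup_(w in W M) F2 (M, w)).
have fPP : finite_set PP.
  apply: bigcup_finite; first exact: finite_fset.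
  move=> M ME; have KM := set_mem (EK _ ME).
  have [oV [fW _]] := Hd M KM.
  rewrite finite_setU; split; first by case: (HF1 M KM).
  apply: bigcup_finite => // w Ww; by case: (HF2 (M, w) KM Ww).
have PPP : PP `<=` P.
  move=> A [M ME]; have KM := set_mem (EK _ ME).
  case=> [A1|[w Ww A2]]; first by case: (HF1 M KM) => _ + _ _; apply.
  by case: (HF2 (M, w) KM Ww) => _ + _ _; apply.
exists [set vbox S | S in [set S | S `<=` PP /\ vbox S `<=` U]]; split.
- apply: finite_image.
  apply: (@sub_finite_set _ _ [set S | S `<=` PP]); last exact: finite_powerset.
  by move=> S [].
- move=> _ [S [SP _] <-]; exists S => //; split.
    exact: sub_finite_set SP fPP.
  exact: subset_trans SP PPP.
- move=> K KK_K; have [M ME OMK] := KE _ KK_K.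
  have KM := set_mem (EK _ ME).
  have [oV [fW [oW [BU [oV' [og [MB [cV' cg]]]]]]]] := Hd M KM.
  have [fF1 F1P LF1 F1V] := HF1 M KM.
  case: OMK => KV' KG.
  pose S := [set A | (F1 M A \/ exists2 w, W M w & F2 (M, w) A) /\ sval K `&` A !=set0].
  have SPP : S `<=` PP.
    move=> A [[A1|[w Ww A2]] _]; exists M => //; [by left| right; by exists w].
  have SV : \bigcup_(A in S) A `<=` V M.
    move=> x [A [[A1|[w Ww A2]] _] Ax]; first by apply: F1V; exists A.
    by case: (HF2 (M, w) KM Ww) => _ _ _ /(_ x) []; [exists A|].
  have vS : vbox S `<=` U.
    move=> N [NS NA]; apply: BU; split; first exact: subset_trans NS SV.
    move=> w Ww; have [x [Kx gx]] := KG _ (ex_intro2 _ _ w Ww erefl).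
    have [_ _ LF2 F2w] := HF2 (M, w) KM Ww.
    have [|A A2 Ax] := LF2 x.
      split; first by exists K.
      split; apply: subset_closure => //; exact: KV'.
    have SA : S A by split; [right; exists w | exists x].
    have [y [Ny Ay]] := NA _ SA.
    exists y; split => //; have /F2w [] : (\bigcup_(A in F2 (M, w)) A) y by exists A.
    by [].
  exists (vbox S); first by exists S.
  split; last by move=> A [].
  move=> x Kx; have [|A A1 Ax] := LF1 x.
    split; first by exists K.
    apply: subset_closure; exact: KV'.
  by exists A => //; split; [left | exists x].
- by move=> N [_ [S [_ SU] <-]]; apply: SU.
Qed.
End Fwd.
Arguments vbox {X}.
Arguments QQ {X}.

Section Rest.
Variable X : topologicalType.
Local Notation H := (hyperspace X).

Lemma H_cc (P : set (set X)) : compact_countable P -> compact_countable (QQ P).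
Proof.
move=> hP KK cKK.
pose L := \bigcup_(M in KK) sval M.
have cnt := hP L (union_compact cKK).
have sb : [set A | QQ P A /\ A `&` KK !=set0] `<=`
    vbox @` [set S | S `<=` [set A | P A /\ A `&` L !=set0] /\ finite_set S].
  move=> _ [[S [fS SP] <-] [N [[NS NA] KN]]]; exists S => //; split => // A SA.
  split; first exact: SP.
  have [x [Nx Ax]] := NA _ SA; exists x; split => //; by exists N.
apply: (sub_countable (subset_card_le sb)).
apply: (sub_countable (card_image_le _ _)).
exact: countable_finite_subset cnt.
Qed.

Lemma H_closed (P : set (set X)) : (forall A, P A -> closed A) ->
  forall A, QQ P A -> closed A.
Proof.
move=> cP _ [S [fS SP] <-]; apply: box_closed.
  by apply: closed_bigcup => // A SA; apply: cP; exact: SP.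
by move=> A SA; apply: cP; exact: SP.
Qed.

Definition sing (x : X) : H :=
  exist _ [set x] (asboolT (conj (@compact_set1 _ x) (ex_intro _ x erefl))).

Lemma sing_continuous : continuous sing.
Proof.
apply/continuousP => A [D' sub E]; rewrite -E; rewrite openE => x [i D'i ix].
have [F sF iE] := sub _ D'i.
have Fo : forall p, p \in F -> open p.2 by move=> p /sF /set_mem.
have {}ix : (\bigcap_(p in [set` F]) @vietoris_subbase X p) (sing x).
  by rewrite iE.
have : nbhs x (\bigcap_(p in [set` F]) p.2).
  apply: filter_bigI => p pF; apply: open_nbhs_nbhs; split; first exact: Fo.
  have := ix p pF; case: p pF => [[] U0] pF /=.
    by move=> /(_ x erefl).
  by move=> [y [-> ]].
apply: filterS => y Hy; exists i; first exact: D'i.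
suff : (\bigcap_(p in [set` F]) @vietoris_subbase X p) (sing y).
  rewrite iE; exact.
move=> p pF.
have := Hy p pF; case: p pF => [[] U0] pF /= U0y.
  by move=> z ->.
by exists y.
Qed.

Definition PX (Q : set (set H)) : set (set X) := [set sing @^-1` A | A in Q].

Lemma X_knet (Q : set (set H)) : k_network Q -> k_network (PX Q).
Proof.
move=> hQ K U cK oU KU.
have cK' : compact (sing @` K) :=
  continuous_compact (continuous_subspaceT sing_continuous) cK.
have sK : sing @` K `<=` [set M : H | sval M `<=` U].
  by move=> _ [x Kx <-] y /= ->; exact: KU.
have [F [fF FQ KF FU]] := hQ _ _ cK' (open_sub oU) sK.
exists (preimage sing @` F); split.
- exact: finite_image.
- by move=> _ [A FA <-]; exists A => //; exact: FQ.
- move=> x Kx; have [A FA Ax] := KF (sing x) (ex_intro2 _ _ x Kx erefl).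
  by exists (sing @^-1` A) => //; exists A.
- move=> x [_ [A FA <-] Ax].
  by have := FU (sing x) (ex_intro2 _ _ A FA Ax); apply.
Qed.

Lemma X_cc (Q : set (set H)) : compact_countable Q -> compact_countable (PX Q).
Proof.
move=> hQ K cK.
have cK' : compact (sing @` K) :=
  continuous_compact (continuous_subspaceT sing_continuous) cK.
have sb : [set B | PX Q B /\ B `&` K !=set0] `<=`
   (preimage sing) @` [set A | Q A /\ A `&` (sing @` K) !=set0].
  move=> _ [[A QA <-] [x [Ax Kx]]]; exists A => //; split => //.
  by exists (sing x); split => //; exists x.
apply: (sub_countable (subset_card_le sb)).
apply: (sub_countable (card_image_le _ _)).
exact: hQ.
Qed.

Lemma X_closed (Q : set (set H)) : (forall A, Q A -> closed A) ->
  forall B, PX Q B -> closed B.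
Proof.
move=> cQ _ [A QA <-]; move: sing_continuous => /continuous_closedP; apply.
exact: cQ.
Qed.
End Rest.
Arguments PX {X}.

Theorem corollary3p5 (X : topologicalType) :
  hausdorff_space X -> regular_space X ->
  (aleph_k_space X <-> aleph_k_space (hyperspace X)) /\
  (closed_aleph_k_space X <-> closed_aleph_k_space (hyperspace X)).
Proof.
move=> _ hX; split; split.
- move=> [_ [P [kP cP]]]; split; first exact: H_regular.
  by exists (QQ P); split; [exact: H_knet | exact: H_cc].
- move=> [_ [Q [kQ cQ]]]; split => //.
  by exists (PX Q); split; [exact: X_knet | exact: X_cc].
- move=> [_ [P [kP cP clP]]]; split; first exact: H_regular.
  by exists (QQ P); split; [exact: H_knet | exact: H_cc | exact: H_closed].
- move=> [_ [Q [kQ cQ clQ]]]; split => //.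
  by exists (PX Q); split; [exact: X_knet | exact: X_cc | exact: X_closed].
Qed.
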